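(* A regular language $L\subseteq\Sigma^*$ is biRFSA if and only if it is topological. Moreover, if $L$ is topological, then the map $\theta\colon J(\mathrm{LQ}(L))\to J(\mathrm{LQ}(L^r))$ defined by $\mathrm{dr}_L(\theta(j))=\tau(j)$, where $\tau(j)=\bigcup\{X\in\mathrm{LQ}(L): j\not\subseteq X\}$, is an nfa isomorphism from $N_L$ to $(N_{L^r})^r$.
   Context: $u^{-1}L=\{w:uw\in L\}$, $U^{-1}L=\bigcup_{u\in U}u^{-1}L$; $w^r$ is the reversal of $w$, $K^r=\{w^r:w\in K\}$, $\overline K=\Sigma^*\setminus K$. $\mathrm{LQ}(L)$ is the finite lattice (under $\subseteq$) of finite unions (including $\emptyset$) of left derivatives of $L$; $J(S)$ is the set of join-irreducible elements of a finite lattice $S$. $L$ is topological if $\mathrm{LQ}(L)$ is a distributive lattice. The canonical residual automaton $N_L$ is the nfa with states $J(\mathrm{LQ}(L))$, transitions $X\xrightarrow{a}Y$ iff $Y\subseteq a^{-1}X$, initial states those $X\subseteq L$, final states those $X$ with $\epsilon\in X$. For an nfa $N$, $N^r$ is its reverse (transitions reversed, initial and final states swapped). $L$ is biRFSA if $N_L$ is isomorphic (as an nfa) to $(N_{L^r})^r$. $\mathrm{dr}_L\colon\mathrm{LQ}(L^r)\to\mathrm{LQ}(L)$, $K\mapsto(\overline{K^r})^{-1}L$, is an order-reversing bijection which restricts to a bijection from $J(\mathrm{LQ}(L^r))$ onto the meet-irreducible elements of $\mathrm{LQ}(L)$. *)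

(* Defs.v *)
From mathcomp Require Import all_boot.
Unset Printing Implicit Defensive.

Section Lang.
Variable A : finType.

(* Languages over A: arbitrary subsets of A^* (Leibniz equality of languages
   is set equality, via functional/propositional extensionality). *)
Definition word := seq A.
Definition lang := word -> Prop.

Definition lsub (K1 K2 : lang) : Prop := forall w, K1 w -> K2 w.
Definition lunion (K1 K2 : lang) : lang := fun w => K1 w \/ K2 w.
Definition lempty : lang := fun _ => False.

Definition lderiv (u : word) (L : lang) : lang := fun w => L (u ++ w).
Definition lderivs (U : lang) (L : lang) : lang :=
  fun w => exists u, U u /\ L (u ++ w).
Definition lrev (K : lang) : lang := fun w => K (rev w).
Definition lcompl (K : lang) : lang := fun w => ~ K w.

Record dfa := DFA {
  dstate : finType;
  dstart : dstate;
  dstep : dstate -> A -> dstate;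
  dfinal : pred dstate }.

Definition dfa_accepts (M : dfa) (w : word) : bool :=
  dfinal M (foldl (dstep M) (dstart M) w).

Definition regular (L : lang) : Prop :=
  exists M : dfa, forall w, L w <-> dfa_accepts M w.

Definition LQ (L : lang) (K : lang) : Prop :=
  exists U : seq word, K = lderivs (fun u => u \in U) L.

Definition LQ_meet (L : lang) (x y m : lang) : Prop :=
  [/\ LQ L m, lsub m x, lsub m y &
      forall k, LQ L k -> lsub k x -> lsub k y -> lsub k m].

(* L is topological: the lattice LQ(L) (join = union, meet = glb in LQ(L))
   is distributive. *)
Definition topological (L : lang) : Prop :=
  forall x y z m1 m2 m3, LQ L x -> LQ L y -> LQ L z ->
    LQ_meet L x (lunion y z) m1 -> LQ_meet L x y m2 -> LQ_meet L x z m3 ->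
    m1 = lunion m2 m3.

Definition JI (L : lang) (X : lang) : Prop :=
  [/\ LQ L X, X <> lempty &
      forall Y Z, LQ L Y -> LQ L Z -> X = lunion Y Z -> X = Y \/ X = Z].

Record nfa := NFA {
  nstate : Type;
  ntrans : nstate -> A -> nstate -> Prop;
  ninit : nstate -> Prop;
  nfinal : nstate -> Prop }.

Definition nfa_rev (N : nfa) : nfa :=
  @NFA (nstate N) (fun p a q => ntrans N q a p) (nfinal N) (ninit N).

Definition nfa_iso (N1 N2 : nfa) (f : nstate N1 -> nstate N2) : Prop :=
  [/\ bijective f,
      forall p a q, ntrans N1 p a q <-> ntrans N2 (f p) a (f q),
      forall p, ninit N1 p <-> ninit N2 (f p) &
      forall p, nfinal N1 p <-> nfinal N2 (f p)].

Definition nfa_isomorphic (N1 N2 : nfa) : Prop :=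
  exists f, @nfa_iso N1 N2 f.

Definition JIstate (L : lang) := {X : lang | JI L X}.

Definition canRFSA (L : lang) : nfa :=
  @NFA (JIstate L)
    (fun X a Y => lsub (sval Y) (lderiv [:: a] (sval X)))
    (fun X => lsub (sval X) L)
    (fun X => sval X [::]).

Definition biRFSA (L : lang) : Prop :=
  nfa_isomorphic (canRFSA L) (nfa_rev (canRFSA (lrev L))).

Definition dr (L : lang) (K : lang) : lang := lderivs (lcompl (lrev K)) L.

Definition tau (L : lang) (j : lang) : lang :=
  fun w => exists X, [/\ LQ L X, ~ lsub j X & X w].

End Lang.

Arguments lsub {A}. Arguments lunion {A}. Arguments lempty {A}.
Arguments lderiv {A}. Arguments lderivs {A}. Arguments lrev {A}.
Arguments lcompl {A}. Arguments regular {A}. Arguments LQ {A}.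
Arguments LQ_meet {A}. Arguments topological {A}. Arguments JI {A}.
Arguments nfa_rev {A}. Arguments nfa_iso {A}. Arguments nfa_isomorphic {A}.
Arguments JIstate {A}. Arguments canRFSA {A}. Arguments biRFSA {A}.
Arguments dr {A}. Arguments tau {A}.

(* Main.v *)
Require Import Defs.
From mathcomp Require Import all_boot.
From Stdlib Require Import Classical ClassicalEpsilon FunctionalExtensionality PropExtensionality ProofIrrelevance.

Set Implicit Arguments. Unset Strict Implicit.

Section Gen.
Variable A : finType.
Implicit Types (L K X Y Z : lang A) (u v w : word A).

Lemma lang_ext K1 K2 : (forall w, K1 w <-> K2 w) -> K1 = K2.
Proof. move=> H; apply: functional_extensionality => w; apply: propositional_extensionality; exact: H. Qed.

Definition pb (P : Prop) : bool := if excluded_middle_informative P then true else false.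
Lemma pbE P : pb P <-> P.
Proof. rewrite /pb; case: excluded_middle_informative => h; split => //. Qed.

Lemma sig_eq (T : Type) (P : T -> Prop) (x y : {a | P a}) : sval x = sval y -> x = y.
Proof. case: x => a ha; case: y => b hb /= e; subst b; f_equal; apply: proof_irrelevance. Qed.

Lemma LQ_empty L : LQ L lempty.
Proof. exists [::]; apply: lang_ext => w; split => [[]|[u []]]; by rewrite in_nil. Qed.

Lemma LQ_union L X Y : LQ L X -> LQ L Y -> LQ L (lunion X Y).
Proof.
case=> U -> [V ->]; exists (U ++ V); apply: lang_ext => w; split.
- by case=> [[u [hu h]]|[u [hu h]]]; exists u; rewrite mem_cat hu ?orbT.
- case=> u []; rewrite mem_cat => /orP [hu|hu] h; [left|right]; by exists u.
Qed.

Lemma LQ_row L u : LQ L (lderiv u L).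
Proof.
exists [:: u]; apply: lang_ext => w; split => [h|[u' [hu' h]]].
- by exists u; rewrite mem_seq1.
- by move: hu'; rewrite mem_seq1 => /eqP e; subst u'.
Qed.

Lemma LQ_L L : LQ L L.
Proof. exact: (LQ_row L [::]). Qed.

Lemma LQ_cover L X w : LQ L X -> X w -> exists u, lsub (lderiv u L) X /\ L (u ++ w).
Proof. case=> U -> [u [hu h]]; exists u; split => // z hz; by exists u. Qed.

Lemma LQ_deriv L X a : LQ L X -> LQ L (lderiv [:: a] X).
Proof.
case=> U ->; exists (map (fun u => rcons u a) U); apply: lang_ext => w; split.
- case=> u [hu h]; exists (rcons u a); split; [exact: map_f | by rewrite cat_rcons].
- case=> u' [/mapP [u hu ->] h]; exists u; split => //; by rewrite -cat_rcons.
Qed.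

Fixpoint Rt (N : nfa A) (x : nstate _ N) (w : word A) {struct w} : Prop :=
  match w with [::] => nfinal _ N x | a :: w' => exists y, ntrans _ N x a y /\ Rt y w' end.
Fixpoint LftR (N : nfa A) (y : nstate _ N) (w : word A) {struct w} : Prop :=
  match w with [::] => ninit _ N y | a :: w' => exists x, LftR x w' /\ ntrans _ N x a y end.

Lemma iso_Rt N1 N2 f : @nfa_iso A N1 N2 f -> forall w x, Rt x w <-> Rt (f x) w.
Proof.
case=> [[g fg gf] htr hin hfi] w; elim: w => [|a w IH] x /=; first exact: hfi.
split.
- case=> y [t r]; exists (f y); split; [exact/htr | exact/IH].
- case=> y [t r]; exists (g y); split; [apply/htr; by rewrite gf | apply/IH; by rewrite gf].
Qed.

Lemma iso_LftR N1 N2 f : @nfa_iso A N1 N2 f -> forall w x, LftR x w <-> LftR (f x) w.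
Proof.
case=> [[g fg gf] htr hin hfi] w; elim: w => [|a w IH] x /=; first exact: hin.
split.
- case=> y [t r]; exists (f y); split; [exact/IH | exact/htr].
- case=> y [t r]; exists (g y); split; [apply/IH; by rewrite gf | apply/htr; by rewrite gf].
Qed.

Lemma rev_LftR (N : nfa A) w (y : nstate _ N) : @LftR (nfa_rev N) y w <-> Rt y w.
Proof.
elim: w y => [|a w IH] y /=; first by [].
split; case=> x [h1 h2]; exists x; split => //; exact/IH.
Qed.

End Gen.

Section Reg.
Variable A : finType.
Variables (L : lang A) (M : dfa A).
Hypothesis hM : forall w, L w <-> dfa_accepts _ M w.

Definition run (s : dstate _ M) (w : word A) := foldl (dstep _ M) s w.
Definition Lq (s : dstate _ M) : lang A := fun w => dfinal _ M (run s w).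
Definition reach (s : dstate _ M) := exists u, run (dstart _ M) u = s.

Lemma row_Lq u : lderiv u L = Lq (run (dstart _ M) u).
Proof. apply: lang_ext => w; by rewrite /lderiv hM /dfa_accepts /Lq /run foldl_cat. Qed.

Lemma LqE u w : Lq (run (dstart _ M) u) w <-> L (u ++ w).
Proof. by rewrite -row_Lq. Qed.

Lemma reach_run u : reach (run (dstart _ M) u).
Proof. by exists u. Qed.

Lemma LQ_Lq s : reach s -> LQ L (Lq s).
Proof. case=> u <-; rewrite -row_Lq; exact: LQ_row. Qed.

Definition langl (l : seq (dstate _ M)) : lang A := fun w => exists s, s \in l /\ Lq s w.

Lemma langl_cons s l : langl (s :: l) = lunion (Lq s) (langl l).
Proof.
apply: lang_ext => w; split.
- case=> s' []; rewrite in_cons => /orP [/eqP ->|h] h'; [left|right] => //; by exists s'.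
- case=> [h|[s' [h h']]]; [exists s | exists s']; by rewrite in_cons ?eqxx ?h ?orbT.
Qed.

Lemma langl_nil : langl [::] = lempty.
Proof. apply: lang_ext => w; split => [[s []]|[]]; by rewrite in_nil. Qed.

Lemma LQ_langl l : (forall s, s \in l -> reach s) -> LQ L (langl l).
Proof.
elim: l => [|s l IH] hl; first by rewrite langl_nil; exact: LQ_empty.
rewrite langl_cons; apply: LQ_union; first by apply: LQ_Lq; apply: hl; rewrite in_cons eqxx.
apply: IH => s' h; apply: hl; by rewrite in_cons h orbT.
Qed.

Lemma LQ_lderivs W : LQ L (lderivs W L).
Proof.
set l := filter (fun s => pb (exists u, W u /\ run (dstart _ M) u = s)) (enum (dstate _ M)).
have -> : lderivs W L = langl l.
  apply: lang_ext => w; split.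
  - case=> u [hW h]; exists (run (dstart _ M) u); split; last exact/LqE.
    rewrite mem_filter mem_enum andbT; apply/pbE; by exists u.
  - case=> s []; rewrite mem_filter mem_enum andbT => /pbE [u [hW <-]] /LqE h; by exists u.
apply: LQ_langl => s; rewrite mem_filter => /andP [/pbE [u [_ <-]] _]; exact: reach_run.
Qed.

Lemma FUJ X l : JI L X -> (forall s, s \in l -> reach s) -> X = langl l ->
  exists s, s \in l /\ X = Lq s.
Proof.
case=> hX hne hji; elim: l => [|s l IH] hr e.
  by exfalso; apply: hne; rewrite e langl_nil.
rewrite langl_cons in e.
have hs : reach s by apply: hr; rewrite in_cons eqxx.
have hl : forall s', s' \in l -> reach s' by move=> s' h; apply: hr; rewrite in_cons h orbT.
case: (hji _ _ (LQ_Lq hs) (LQ_langl hl) e) => [->|e2].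
  by exists s; rewrite in_cons eqxx.
case: (IH hl e2) => s' [h1 h2]; exists s'; by rewrite in_cons h1 orbT.
Qed.

Lemma FU X (P : lang A -> Prop) : JI L X -> (forall Y, P Y -> LQ L Y /\ lsub Y X) ->
  (forall w, X w -> exists Y, P Y /\ Y w) -> exists Y, P Y /\ X = Y.
Proof.
move=> hJ hP hcov.
set l := filter (fun s => pb (reach s /\ exists Y, P Y /\ lsub (Lq s) Y)) (enum (dstate _ M)).
have e : X = langl l.
  apply: lang_ext => w; split.
  - move=> /hcov [Y [PY Yw]]; case: (hP _ PY) => hY _.
    case: (LQ_cover hY Yw) => u [hsub hu].
    exists (run (dstart _ M) u); split; last exact/LqE.
    rewrite mem_filter mem_enum andbT; apply/pbE; split; first exact: reach_run.
    by exists Y; rewrite -row_Lq.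
  - case=> s []; rewrite mem_filter mem_enum andbT => /pbE [_ [Y [PY hs]]] h.
    case: (hP _ PY) => _ hYX; exact/hYX/hs.
have hr : forall s, s \in l -> reach s by move=> s; rewrite mem_filter => /andP [/pbE []].
case: (FUJ hJ hr e) => s [hs eX].
move: hs; rewrite mem_filter mem_enum andbT => /pbE [_ [Y [PY hsY]]].
exists Y; split => //; apply: lang_ext => w; split.
- by rewrite eX => /hsY.
- by case: (hP _ PY) => _ h /h.
Qed.

Lemma JI_row X : JI L X -> exists q, X = lderiv q L.
Proof.
move=> hJ; case: (hJ) => hX _ _.
case: (@FU X (fun Y => exists q, Y = lderiv q L /\ lsub Y X) hJ).
- move=> Y [q [-> h]]; split => //; exact: LQ_row.
- move=> w hw; case: (LQ_cover hX hw) => u [hs hu]; exists (lderiv u L); split => //.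
  by exists u.
- move=> Y [[q [-> _]] ->]; by exists q.
Qed.

Definition canon X : {set dstate _ M} := [set s | pb (reach s /\ lsub (Lq s) X)].
Definition langS (T : {set dstate _ M}) : lang A := fun w => exists s, s \in T /\ Lq s w.

Lemma LQ_canon X : LQ L X -> X = langS (canon X).
Proof.
move=> hX; apply: lang_ext => w; split.
- move=> hw; case: (LQ_cover hX hw) => u [hs hu]; exists (run (dstart _ M) u).
  split; last exact/LqE.
  rewrite inE; apply/pbE; split; first exact: reach_run. by rewrite -row_Lq.
- case=> s []; rewrite inE => /pbE [_ h] /h; done.
Qed.

Lemma canon_lt X Y : LQ L X -> LQ L Y -> lsub Y X -> Y <> X -> #|canon Y| < #|canon X|.
Proof.
move=> hX hY hYX hne; apply: proper_card; rewrite properEneq; apply/andP; split.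
- apply/negP => /eqP e; apply: hne; by rewrite (LQ_canon hX) (LQ_canon hY) e.
- apply/subsetP => s; rewrite !inE => /pbE [hr h]; apply/pbE; split => // z /h; exact: hYX.
Qed.

Lemma JI_cover X w : LQ L X -> X w -> exists J, [/\ JI L J, lsub J X & J w].
Proof.
suff H : forall n X, #|canon X| < n -> LQ L X -> X w -> exists J, [/\ JI L J, lsub J X & J w].
  by apply: H.
elim=> [//|n IH] {}X hc hX hw.
case: (classic (JI L X)) => hJ; first by exists X; split => // z.
have [Y [Z [hY hZ e hY' hZ']]] : exists Y Z, [/\ LQ L Y, LQ L Z, X = lunion Y Z, X <> Y & X <> Z].
  apply: NNPP => hn; apply: hJ; split => //.
  - by move=> e; rewrite e in hw.
  - move=> Y Z hY hZ e; apply: NNPP => h2; apply: hn; exists Y, Z; split => // e'; apply: h2;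
      [left|right] => //.
have sY : lsub Y X by move=> z hz; rewrite e; left.
have sZ : lsub Z X by move=> z hz; rewrite e; right.
have : Y w \/ Z w by move: (hw); rewrite e.
case=> [hwY|hwZ].
- have hlt := canon_lt hX hY sY (fun e' => hY' (esym e')).
  case: (IH Y (leq_trans hlt hc) hY hwY) => J [h1 h2 h3]; exists J; split => // z /h2 /sY //.
- have hlt := canon_lt hX hZ sZ (fun e' => hZ' (esym e')).
  case: (IH Z (leq_trans hlt hc) hZ hwZ) => J [h1 h2 h3]; exists J; split => // z /h2 /sZ //.
Qed.

Lemma Rt_can w (X : JIstate L) : @Rt _ (canRFSA L) X w <-> sval X w.
Proof.
elim: w X => [|a w IH] X /=; first by [].
split.
- case=> Y [t /IH r]; exact: (t w r).
- move=> h; have hD : LQ L (lderiv [:: a] (sval X)) by apply: LQ_deriv; case: (svalP X).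
  case: (JI_cover hD h) => J [hJ hs hw]; exists (exist _ J hJ); split => //; exact/IH.
Qed.

Lemma LftR_sub w (X : JIstate L) : @LftR _ (canRFSA L) X w -> lsub (sval X) (lderiv (rev w) L).
Proof.
elim: w X => [|a w IH] X /=; first by [].
case=> Y [/IH hY t] z /t /hY; by rewrite /lderiv rev_cons cat_rcons.
Qed.

Lemma LftR_cover w z : lderiv (rev w) L z -> exists Y : JIstate L, @LftR _ (canRFSA L) Y w /\ sval Y z.
Proof.
elim: w z => [|a w IH] z /=.
  move=> h; case: (JI_cover (LQ_L L) h) => J [hJ hs hw]; by exists (exist _ J hJ).
rewrite /lderiv rev_cons cat_rcons => /IH [Y [hY hz]].
have hD : LQ L (lderiv [:: a] (sval Y)) by apply: LQ_deriv; case: (svalP Y).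
case: (JI_cover hD hz) => J [hJ hs hw]; exists (exist _ J hJ); split => //.
by exists Y.
Qed.

Lemma LftR_row (X : JIstate L) q : sval X = lderiv q L -> @LftR _ (canRFSA L) X (rev q).
Proof.
move=> eX.
case: (@FU (sval X) (fun Y => exists Y' : JIstate L, @LftR _ (canRFSA L) Y' (rev q) /\ sval Y' = Y) (svalP X)).
- move=> Y [Y' [h <-]]; split; first by case: (svalP Y').
  move=> z /(LftR_sub h); by rewrite revK eX.
- move=> w hw; have : lderiv (rev (rev q)) L w by rewrite revK -eX.
  case/LftR_cover => Y [h1 h2]; exists (sval Y); split => //; by exists Y.
- move=> Y [[Y' [h e]] e2]; have -> : X = Y' by apply: sig_eq; rewrite e e2.
  done.
Qed.

End Reg.

Section Rev.
Variable A : finType.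

Definition revdfa (M : dfa A) : dfa A :=
  @DFA A {set dstate _ M} [set s | dfinal _ M s]
       (fun T a => [set s | dstep _ M s a \in T]) (fun T => dstart _ M \in T).

Lemma revdfa_run (M : dfa A) w (T : {set dstate _ M}) s :
  (s \in foldl (dstep _ (revdfa M)) T w) = (run s (rev w) \in T).
Proof.
elim: w T => [|a w IH] T //=.
by rewrite IH /= inE rev_cons /run foldl_rcons.
Qed.

Lemma rev_regular (L : lang A) (M : dfa A) : (forall w, L w <-> dfa_accepts _ M w) ->
  forall w, lrev L w <-> dfa_accepts _ (revdfa M) w.
Proof.
move=> hM w; rewrite /lrev hM /dfa_accepts /=.
by rewrite revdfa_run inE.
Qed.
End Rev.

Section Main.
Variable A : finType.
Variables (L : lang A) (M : dfa A).
Hypothesis hM : forall w, L w <-> dfa_accepts _ M w.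
Let hR := rev_regular hM.

Definition Kj (j : lang A) : lang A := fun v => lsub j (lderiv (rev v) L).

Definition mt (X Y : lang A) : lang A :=
  lderivs (fun u => lsub (lderiv u L) X /\ lsub (lderiv u L) Y) L.

Lemma mt_meet X Y : LQ_meet L X Y (mt X Y).
Proof.
split; first exact: (LQ_lderivs hM).
- by move=> w [u [[h _] hu]]; exact: h.
- by move=> w [u [[_ h] hu]]; exact: h.
- move=> k hk hX hY w hw; case: (LQ_cover hk hw) => u [hs hu].
  exists u; split => //; split => z /hs; [exact: hX | exact: hY].
Qed.

Definition JP (X : lang A) := forall Y Z, LQ L Y -> LQ L Z -> lsub X (lunion Y Z) -> lsub X Y \/ lsub X Z.

Lemma jp_of_topo : topological L -> forall X, JI L X -> JP X.
Proof.
move=> topo X hJ Y Z hY hZ hs; case: (hJ) => hX hne hji.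
have h1 : LQ_meet L X (lunion Y Z) X by split => // k _ h _.
have e := topo X Y Z X (mt X Y) (mt X Z) hX hY hZ h1 (mt_meet X Y) (mt_meet X Z).
case: (hji _ _ (LQ_lderivs hM _) (LQ_lderivs hM _) e) => e'; [left|right];
  move=> z; rewrite {1}e'; case=> u [[_ hu] h]; exact: hu z h.
Qed.

Lemma topo_of_jp : (forall X, JI L X -> JP X) -> topological L.
Proof.
move=> jp x y z m1 m2 m3 hx hy hz [h1 h1x h1yz h1u] [h2 h2x h2y h2u] [h3 h3x h3z h3u].
apply: lang_ext => w; split.
- move=> hw; case: (JI_cover hM h1 hw) => J [hJ hJs hJw].
  have hJx : lsub J x by move=> v /hJs /h1x.
  have hJyz : lsub J (lunion y z) by move=> v /hJs /h1yz.
  have hJL : LQ L J by case: hJ.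
  case: (jp J hJ y z hy hz hJyz) => hJy; [left; exact: (h2u J hJL hJx hJy w hJw)
                                          |right; exact: (h3u J hJL hJx hJy w hJw)].
- apply: h1u; first exact: LQ_union.
  + by move=> v [/h2x|/h3x].
  + by move=> v [/h2y h|/h3z h]; [left|right].
Qed.

Lemma jp_langl X (l : seq (dstate _ M)) : X <> lempty -> JP X -> (forall s, s \in l -> reach s) ->
  lsub X (langl l) -> exists s, s \in l /\ lsub X (Lq s).
Proof.
move=> hne jp; elim: l => [|s l IH] hr hs.
  exfalso; apply: hne; apply: lang_ext => w; split => // /hs [s []]; by rewrite in_nil.
have hs0 : reach s by apply: hr; rewrite in_cons eqxx.
have hl : forall s', s' \in l -> reach s' by move=> s' h; apply: hr; rewrite in_cons h orbT.
rewrite langl_cons in hs.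
case: (jp _ _ (LQ_Lq hM hs0) (LQ_langl hM hl) hs) => h.
  by exists s; rewrite in_cons eqxx.
case: (IH hl h) => s' [h1 h2]; exists s'; by rewrite in_cons h1 orbT.
Qed.

Lemma gen_exists j : topological L -> JI L j ->
  exists w0, j w0 /\ forall u, L (u ++ w0) -> lsub j (lderiv u L).
Proof.
move=> topo hj; case: (hj) => hjLQ hne _; apply: NNPP => hn.
set l := filter (fun s => pb (reach s /\ ~ lsub j (Lq s))) (enum (dstate _ M)).
have hr : forall s, s \in l -> reach s by move=> s; rewrite mem_filter => /andP [/pbE []].
have hsub : lsub j (langl l).
  move=> w hw.
  have hn' : ~ (forall u, L (u ++ w) -> lsub j (lderiv u L)) by move=> h; apply: hn; exists w.
  case: (not_all_ex_not _ _ hn') => u hu'; case: (imply_to_and _ _ hu') => hu hnu.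
  exists (run (dstart _ M) u); split; last exact/(LqE hM).
  rewrite mem_filter mem_enum andbT; apply/pbE; split; first exact: reach_run.
  by rewrite -(row_Lq hM).
case: (jp_langl hne (jp_of_topo topo hj) hr hsub) => s [].
by rewrite mem_filter => /andP [/pbE [_ h] _] h'.
Qed.

Lemma Kj_half j q Y : j = lderiv q L -> LQ (lrev L) Y -> Y (rev q) -> lsub (Kj j) Y.
Proof.
move=> ej [V ->] [x [hx h]] v hv.
move: h; rewrite /lrev rev_cat revK => h.
have := hv (rev x); rewrite ej => /(_ h) h2.
exists x; split => //; by rewrite /lrev rev_cat.
Qed.

Lemma Kj_JI j : topological L -> JI L j -> JI (lrev L) (Kj j).
Proof.
move=> topo hj; case: (JI_row hM hj) => q ej.
have hq : Kj j (rev q) by move=> z; rewrite revK ej.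
split.
- case: (gen_exists topo hj) => w0 [hw0 hg].
  have -> : Kj j = lderiv (rev w0) (lrev L).
    apply: lang_ext => v; rewrite /Kj /lderiv /lrev rev_cat revK; split.
    + by move=> h; exact: h w0 hw0.
    + exact: hg.
  exact: LQ_row.
- by move=> e; rewrite e in hq.
- move=> Y Z hY hZ e.
  have : Y (rev q) \/ Z (rev q) by move: hq; rewrite e.
  case=> h; [left|right]; apply: lang_ext => v; split.
  + exact: (Kj_half ej hY h).
  + by move=> hv; rewrite e; left.
  + exact: (Kj_half ej hZ h).
  + by move=> hv; rewrite e; right.
Qed.

Lemma dr_Kj j : dr L (Kj j) = tau L j.
Proof.
apply: lang_ext => w; rewrite /dr /lderivs /lcompl /lrev /Kj /tau; split.
- case=> u [hn h]; exists (lderiv u L); split => //; first exact: LQ_row.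
  by rewrite revK in hn.
- case=> X [hX hn hw]; case: (LQ_cover hX hw) => u [hs hu]; exists u; split => //.
  rewrite revK => hj; apply: hn => z /hj /hs //.
Qed.

Lemma drG K v : LQ (lrev L) K -> (K v <-> ~ lsub (lderiv (rev v) L) (dr L K)).
Proof.
case=> V ->; split.
- case=> x [hx h] hs.
  have hx2 : lderiv (rev v) L (rev x) by move: h; rewrite /lrev rev_cat.
  case: (hs _ hx2) => u [hu h2]; apply: hu; exists x; split => //.
  by rewrite /lrev rev_cat revK.
- move=> hn; apply: NNPP => hk; apply: hn => z hz; exists (rev v); split => //.
  by rewrite /lcompl /lrev revK.
Qed.

Lemma dr_inj K1 K2 : LQ (lrev L) K1 -> LQ (lrev L) K2 -> dr L K1 = dr L K2 -> K1 = K2.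
Proof.
move=> h1 h2 e; apply: lang_ext => v; rewrite (drG v h1) (drG v h2) e; done.
Qed.

Lemma Kj_inj j1 j2 : JI L j1 -> JI L j2 -> Kj j1 = Kj j2 -> j1 = j2.
Proof.
move=> h1 h2 e; case: (JI_row hM h1) => q1 e1; case: (JI_row hM h2) => q2 e2.
have s21 : lsub j2 j1.
  have : Kj j1 (rev q1) by move=> z; rewrite revK e1.
  by rewrite e /Kj revK -e1.
have s12 : lsub j1 j2.
  have : Kj j2 (rev q2) by move=> z; rewrite revK e2.
  by rewrite -e /Kj revK -e2.
apply: lang_ext => w; split; [exact: s12 | exact: s21].
Qed.

End Main.

Section Main2.
Variable A : finType.
Variables (L : lang A) (M : dfa A).
Hypothesis hM : forall w, L w <-> dfa_accepts _ M w.
Let hR := rev_regular hM.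

Lemma surjK : topological L -> forall K : JIstate (lrev L), exists j : JIstate L, Kj L (sval j) = sval K.
Proof.
move=> topo K; have hKJ := svalP K.
case: (JI_row hR hKJ) => x ex.
set p := rev x.
have hK : forall v, sval K v <-> L (rev v ++ p) by move=> v; rewrite ex /lderiv /lrev rev_cat.
have jp := jp_of_topo hM topo.
set Ms := lderivs (fun u => ~ L (u ++ p)) L.
have hMsp : ~ Ms p by case=> u [h1 h2].
have hMsLQ : LQ L Ms := LQ_lderivs hM _.
have KLQ : forall C, LQ (lrev L) (fun v => ~ lsub (lderiv (rev v) L) C).
  move=> C; have -> : (fun v => ~ lsub (lderiv (rev v) L) C) = lderivs (fun y => ~ C (rev y)) (lrev L).
    apply: lang_ext => v; split.
    - move=> h; case: (not_all_ex_not _ _ h) => z hz; case: (imply_to_and _ _ hz) => h1 h2.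
      exists (rev z); split; first by rewrite revK.
      by rewrite /lrev rev_cat revK.
    - case=> y [hy h] hs; apply: hy; apply: hs; move: h; by rewrite /lrev rev_cat.
  exact: (LQ_lderivs hR).
have KsubK : forall C, lsub (fun v => ~ lsub (lderiv (rev v) L) (lunion Ms C)) (sval K).
  move=> C v h; apply/hK; apply: NNPP => hn; apply: h => z hz; left; exists (rev v); split => //.
have star : forall Aa Bb, LQ L Aa -> LQ L Bb -> Aa p -> Bb p ->
    exists J, [/\ LQ L J, J p, lsub J Aa & lsub J Bb].
  move=> Aa Bb hA hB hAp hBp.
  set KA := fun v => ~ lsub (lderiv (rev v) L) (lunion Ms Aa).
  set KB := fun v => ~ lsub (lderiv (rev v) L) (lunion Ms Bb).
  case: (classic (exists v, [/\ sval K v, ~ KA v & ~ KB v])) => [[v [hv hA' hB']] | hn].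
  - have sA : lsub (lderiv (rev v) L) (lunion Ms Aa) by apply: NNPP.
    have sB : lsub (lderiv (rev v) L) (lunion Ms Bb) by apply: NNPP.
    have hvp : lderiv (rev v) L p by apply/hK.
    case: (JI_cover hM (LQ_row L (rev v)) hvp) => J [hJ hJs hJp].
    have j1 : lsub J Aa.
      case: (jp _ hJ _ _ hMsLQ hA (fun z hz => sA z (hJs z hz))) => // h.
      by exfalso; apply: hMsp; apply: h.
    have j2 : lsub J Bb.
      case: (jp _ hJ _ _ hMsLQ hB (fun z hz => sB z (hJs z hz))) => // h.
      by exfalso; apply: hMsp; apply: h.
    exists J; split => //; by case: hJ.
  - exfalso.
    have e : sval K = lunion KA KB.
      apply: lang_ext => v; split.
      + move=> hv; apply: NNPP => hn2; apply: hn; exists v; split => // h;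
          apply: hn2; [left|right] => //.
      + by case; apply: KsubK.
    case: hKJ => _ _ hji.
    case: (hji _ _ (KLQ _) (KLQ _) e) => e2.
    + case: (LQ_cover hA hAp) => u [hs hu].
      have : sval K (rev u) by apply/hK; rewrite revK.
      rewrite e2 => h; apply: h; rewrite revK => z hz; right; exact: hs z hz.
    + case: (LQ_cover hB hBp) => u [hs hu].
      have : sval K (rev u) by apply/hK; rewrite revK.
      rewrite e2 => h; apply: h; rewrite revK => z hz; right; exact: hs z hz.
have iter : forall l : seq (dstate _ M), (forall s, s \in l -> reach s) ->
    (forall s, s \in l -> Lq s p) ->
    exists J, [/\ LQ L J, J p & forall s, s \in l -> lsub J (Lq s)].
  elim=> [|s l IH] hr hp.
  - have [v hv] : exists v, sval K v.
      apply: NNPP => hn; case: hKJ => _ hne _; apply: hne; apply: lang_ext => w; split => // h.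
      by apply: hn; exists w.
    exists (lderiv (rev v) L); split => //; [exact: LQ_row | exact/hK].
  - have hr' : forall s', s' \in l -> reach s' by move=> s' h; apply: hr; rewrite in_cons h orbT.
    have hp' : forall s', s' \in l -> Lq s' p by move=> s' h; apply: hp; rewrite in_cons h orbT.
    case: (IH hr' hp') => J [hJ hJp hJs].
    have hs0 : s \in s :: l by rewrite in_cons eqxx.
    case: (star J (Lq s) hJ (LQ_Lq hM (hr s hs0)) hJp (hp s hs0)) => J' [h1 h2 h3 h4].
    exists J'; split => // s'; rewrite in_cons => /orP [/eqP -> // | hs'].
    by move=> z /h3 /(hJs s' hs').
set l := filter (fun s => pb (reach s /\ Lq s p)) (enum (dstate _ M)).
case: (iter l).
- by move=> s; rewrite mem_filter => /andP [/pbE []].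
- by move=> s; rewrite mem_filter => /andP [/pbE []].
move=> J [hJ hJp hJs].
have hmin : forall u, L (u ++ p) -> lsub J (lderiv u L).
  move=> u hu; rewrite (row_Lq hM u); apply: hJs.
  rewrite mem_filter mem_enum andbT; apply/pbE; split; [exact: reach_run | exact/(LqE hM)].
have hJI : JI L J.
  split => //.
  - by move=> e; rewrite e in hJp.
  - move=> Y Z hY hZ e.
    have : Y p \/ Z p by move: hJp; rewrite e.
    case=> h; [left|right]; apply: lang_ext => w; split.
    + by move=> hw; case: (LQ_cover hY h) => u [hs hu]; apply: hs; apply: (hmin u hu).
    + by move=> hw; rewrite e; left.
    + by move=> hw; case: (LQ_cover hZ h) => u [hs hu]; apply: hs; apply: (hmin u hu).
    + by move=> hw; rewrite e; right.
exists (exist _ J hJI); apply: lang_ext => v /=; rewrite /Kj hK; split.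
- by move=> h; apply: h.
- exact: hmin.
Qed.

Lemma trans_Kj (X Y : lang A) q a : X = lderiv q L ->
  (lsub Y (lderiv [:: a] X) <-> lsub (Kj L X) (lderiv [:: a] (Kj L Y))).
Proof.
move=> eX; split.
- move=> h v hv z hz; move: (hv _ (h z hz)).
  by rewrite /lderiv /= rev_cons cat_rcons.
- move=> h z hz.
  have hq : Kj L X (rev q) by move=> w; rewrite revK eX.
  have := h _ hq z hz.
  by rewrite /lderiv /= rev_cons revK cat_rcons eX.
Qed.

Lemma final_Kj (X : lang A) q : X = lderiv q L -> (X [::] <-> lsub (Kj L X) (lrev L)).
Proof.
move=> eX; split.
- move=> h v hv; move: (hv _ h); by rewrite /lderiv cats0.
- move=> h; have hq : Kj L X (rev q) by move=> w; rewrite revK eX.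
  move: (h _ hq); rewrite /lrev revK eX /lderiv cats0; done.
Qed.

Lemma iso_theta (topo : topological L) (th : JIstate L -> JIstate (lrev L)) :
  (forall j, sval (th j) = Kj L (sval j)) ->
  nfa_iso (canRFSA L) (nfa_rev (canRFSA (lrev L))) th.
Proof.
move=> hth.
have inj : injective th.
  move=> j1 j2 e; apply: sig_eq; apply: (Kj_inj hM (svalP j1) (svalP j2)).
  by rewrite -!hth e.
have surj : forall K, exists j, th j = K.
  move=> K; case: (surjK topo K) => j hj; exists j; apply: sig_eq; by rewrite hth hj.
split.
- pose g K := proj1_sig (constructive_indefinite_description _ (surj K)).
  have gK : forall K, th (g K) = K by move=> K; rewrite /g; case: constructive_indefinite_description.
  exists g; move=> j; [apply: inj | ]; by rewrite gK.
- move=> p a q /=; rewrite !hth.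
  case: (JI_row hM (svalP p)) => r er; exact: (trans_Kj _ _ er).
- move=> p /=; rewrite hth /Kj; split => h z hz; exact: h z hz.
- move=> p /=; rewrite hth; case: (JI_row hM (svalP p)) => r er; exact: (final_Kj er).
Qed.

Lemma jp_of_iso f : nfa_iso (canRFSA L) (nfa_rev (canRFSA (lrev L))) f ->
  forall X, JI L X -> JP L X.
Proof.
move=> hf X hX Y Z hY hZ hs.
pose Xs : JIstate L := exist _ X hX.
have key : forall w, sval (f Xs) w <-> @LftR _ (canRFSA L) Xs w.
  move=> w; rewrite (iso_LftR hf) rev_LftR (Rt_can hR); done.
case: (JI_row hM hX) => q eq.
have h1 : sval (f Xs) (rev q) by apply/key; exact: (LftR_row hM).
case: (svalP (f Xs)) => hfLQ _ _; case: hfLQ => V eV.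
move: (h1); rewrite eV => -[x [hx hxq]].
move: hxq; rewrite /lrev rev_cat revK => hxq.
have hXx : X (rev x) by rewrite eq.
case: (hs _ hXx) => [hYx|hZx]; [left|right].
- case: (LQ_cover hY hYx) => y [hys hy].
  have : sval (f Xs) (rev y) by rewrite eV; exists x; split => //; rewrite /lrev rev_cat revK.
  move/key/LftR_sub => h z /h; rewrite revK => /hys; done.
- case: (LQ_cover hZ hZx) => y [hys hy].
  have : sval (f Xs) (rev y) by rewrite eV; exists x; split => //; rewrite /lrev rev_cat revK.
  move/key/LftR_sub => h z /h; rewrite revK => /hys; done.
Qed.

End Main2.

Theorem mainTheorem20 (A : finType) (L : lang A) :
  regular L ->
  (biRFSA L <-> topological L) /\
  (topological L ->
    (exists theta : JIstate L -> JIstate (lrev L),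
        forall j, dr L (sval (theta j)) = tau L (sval j)) /\
    (forall theta : JIstate L -> JIstate (lrev L),
        (forall j, dr L (sval (theta j)) = tau L (sval j)) ->
        nfa_iso (canRFSA L) (nfa_rev (canRFSA (lrev L))) theta)).
Proof.
case=> M hM; have hR := rev_regular hM.
split; first split.
- case=> f hf; apply: (topo_of_jp hM); exact: (jp_of_iso hM hf).
- move=> topo.
  exists (fun j => exist _ (Kj L (sval j)) (Kj_JI hM topo (svalP j))).
  exact: iso_theta.
- move=> topo; split.
  + exists (fun j => exist _ (Kj L (sval j)) (Kj_JI hM topo (svalP j))).
    move=> j /=; exact: dr_Kj.
  + move=> th hth; apply: (iso_theta hM topo) => j.
    apply: (@dr_inj _ L); first by case: (svalP (th j)).
    * by case: (Kj_JI hM topo (svalP j)).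
    * by rewrite hth dr_Kj.
Qed.
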